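(* Let $q,M,j,y$ be positive integers with $M,j\in[1,q]$ and $y\in[j,q]$. Then $$|\{a\in[0,M-1]\cap\mathbb{Z}: y-j\le (aj)_q<y\}|=\lfloor Mj/q\rfloor+\chi\big(y\le (Mj)_q\big).$$
   Context: For an integer $\ell$, $(\ell)_q$ denotes the least nonnegative residue of $\ell$ modulo $q$. For an inequality $Q$, $\chi(Q)$ equals $1$ if $Q$ is true and $0$ if $Q$ is false. *)

(* Defs.v *)
From mathcomp Require Import all_boot.

(* Main.v *)
Require Import Defs.
From mathcomp Require Import all_boot.
From mathcomp Require Import zify.

Lemma key (q j y : nat) : 0 < q -> 1 <= j <= q -> j <= y <= q -> forall M,
  \sum_(a < M) ((y - j <= (a * j) %% q) && ((a * j) %% q < y) : nat)
    = M * j %/ q + (y <= (M * j) %% q).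
Proof.
move=> q0 /andP[j1 jq] /andP[jy yq]; elim=> [|M IH].
  by rewrite big_ord0 mul0n div0n mod0n leqn0; case: y jy yq => //=; lia.
rewrite big_ord_recr /= IH mulSn.
have e1 := divn_eq (M * j) q.
have r1 : (M * j) %% q < q by rewrite ltn_mod.
set d := (M * j) %/ q in e1 *; set r := (M * j) %% q in e1 r1 *; clearbody d r.
have -> : j + M * j = d * q + (r + j) by lia.
rewrite divnMDl ?modnMDl //.
have e2 := divn_eq (r + j) q.
have r2 : (r + j) %% q < q by rewrite ltn_mod.
have D2 : (r + j) %/ q < 2 by rewrite ltn_divLR //; lia.
set D := (r + j) %/ q in e2 D2 *; set R := (r + j) %% q in e2 r2 *.
rewrite /=.
clearbody D R. case: D e2 D2 => [|[|//]] /= e2 _.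
  case: (leqP y r) => h1; case: (leqP (y - j) r) => h2; case: (leqP y R) => h3; lia.
case: (leqP y r) => h1; case: (leqP (y - j) r) => h2; case: (leqP y R) => h3; lia.
Qed.

Theorem lemma7p1 (q M j y : nat) :
  0 < q -> 1 <= M <= q -> 1 <= j <= q -> j <= y <= q ->
  #|[set a : 'I_M | (y - j <= (a * j) %% q) && ((a * j) %% q < y)]|
    = M * j %/ q + (y <= (M * j) %% q).
Proof.
move=> q0 _ hj hy; rewrite -(@key q j y q0 hj hy M) -sum1_card big_mkcond /=.
by apply: eq_bigr => a _; rewrite inE; case: (_ && _).
Qed.
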